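(* Let $C=\mathbb{S}^1\times\mathbb{R}$ be the flat Euclidean cylinder, $\theta_0\in\mathbb{S}^1$, $v=\{\theta_0\}\times\mathbb{R}$, and let $f:C\to C$ be a geodesic-preserving bijection with $f(v)=v$, $f(\theta_0,0)=(\theta_0,0)$ and $f(\theta_0,1)=(\theta_0,1)$. Then $f(\theta_0,n/2^m)=(\theta_0,n/2^m)$ for all integers $n$ and $m\geq 0$.
   Context: $C$ carries the product of the flat metric on $\mathbb{S}^1=\mathbb{R}/\mathbb{Z}$ and the standard metric on $\mathbb{R}$. A geodesic is the image of a locally isometric immersion of the whole real line; a bijection (not assumed continuous) is geodesic-preserving if it maps every geodesic onto a geodesic as a set. *)

(* Defs.v *)
From Stdlib Require Import Reals Lra ZArith.
Open Scope R_scope.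

(* Fractional part: x - floor x, in [0,1).  (up x is the integer with x < up x <= x+1.) *)
Definition frac (x : R) : R := x - IZR (up x) + 1.

Lemma frac_range (x : R) : 0 <= frac x < 1.
Proof.
  unfold frac; destruct (archimed x) as [H1 H2]; lra.
Qed.

(* The flat cylinder C = S^1 x R with S^1 = R/Z; the angle is the
   representative in [0,1). *)
Record cyl : Type := Cyl { th : R; ht : R; th_range : 0 <= th < 1 }.

Definition pt (t y : R) : cyl := Cyl (frac t) y (frac_range t).

Definition distS1 (a b : R) : R := Rmin (Rabs (a - b)) (1 - Rabs (a - b)).

Definition cdist (p q : cyl) : R :=
  sqrt (distS1 (th p) (th q) ^ 2 + (ht p - ht q) ^ 2).

Definition local_isometry (g : R -> cyl) : Prop :=
  forall s, exists eps, 0 < eps /\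
    forall s1 s2, Rabs (s1 - s) < eps -> Rabs (s2 - s) < eps ->
      cdist (g s1) (g s2) = Rabs (s1 - s2).

Definition geodesic (G : cyl -> Prop) : Prop :=
  exists g : R -> cyl, local_isometry g /\ forall p, G p <-> exists s, g s = p.

Definition image (f : cyl -> cyl) (A : cyl -> Prop) : cyl -> Prop :=
  fun q => exists p, A p /\ f p = q.

Definition bijective (f : cyl -> cyl) : Prop :=
  exists g : cyl -> cyl, (forall p, g (f p) = p) /\ (forall q, f (g q) = q).

Definition geodesic_preserving (f : cyl -> cyl) : Prop :=
  forall G, geodesic G -> geodesic (image f G).

Definition vline (t0 : R) : cyl -> Prop := fun p => th p = frac t0.

(* Main.v *)
Require Import Defs.
From Stdlib Require Import Reals Lra ZArith ProofIrrelevance Classical Lia.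
Open Scope R_scope.

Lemma cyl_eq (p q : cyl) : th p = th q -> ht p = ht q -> p = q.
Proof.
  destruct p as [a b Ha], q as [c d Hc]; simpl; intros -> ->.
  f_equal; apply proof_irrelevance.
Qed.

Lemma int_bounds (n : Z) (lo hi : Z) : IZR lo - 1 < IZR n -> IZR n < IZR hi + 1 ->
  (lo <= n <= hi)%Z.
Proof.
  intros H1 H2. rewrite <- minus_IZR in H1. rewrite <- plus_IZR in H2.
  apply lt_IZR in H1; apply lt_IZR in H2. lia.
Qed.

Lemma half_not_int (n : Z) : IZR n <> 1/2.
Proof.
  intro H. assert (h : (0 <= n <= 0)%Z) by (apply int_bounds; lra).
  assert (n = 0%Z) by lia. subst. simpl in H. lra.
Qed.

Lemma frac_of (x : R) (n : Z) : 0 <= x - IZR n < 1 -> frac x = x - IZR n.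
Proof.
  intros H. unfold frac. rewrite <- (tech_up x (n + 1)).
  - rewrite plus_IZR. simpl. lra.
  - rewrite plus_IZR; simpl; lra.
  - rewrite plus_IZR; simpl; lra.
Qed.

Lemma frac_spec (x : R) : exists n : Z, x = frac x + IZR n.
Proof. exists (up x - 1)%Z. unfold frac. rewrite minus_IZR. simpl. lra. Qed.

Lemma frac_id (x : R) : 0 <= x < 1 -> frac x = x.
Proof. intros H. rewrite (frac_of x 0); simpl; lra. Qed.

Lemma frac_eq (x y : R) : frac x = frac y <-> exists n : Z, x - y = IZR n.
Proof.
  split.
  - intros H. destruct (frac_spec x) as [n Hn]. destruct (frac_spec y) as [m Hm].
    exists (n - m)%Z. rewrite minus_IZR. lra.
  - intros [n Hn]. destruct (frac_spec y) as [m Hm].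
    rewrite (frac_of x (n + m)); [|rewrite plus_IZR; pose proof (frac_range y); lra].
    rewrite plus_IZR. lra.
Qed.

Lemma frac_shift (x : R) (n : Z) : frac (x + IZR n) = frac x.
Proof. apply frac_eq. exists n. ring. Qed.

Lemma frac_ext (x y : R) : x = y -> frac x = frac y.
Proof. intros ->; reflexivity. Qed.

Lemma distS1_shift (u w e : R) (n : Z) : 0 <= u < 1 -> 0 <= w < 1 ->
  u - w = e + IZR n -> Rabs e <= 1/2 -> distS1 u w = Rabs e.
Proof.
  intros Hu Hw He Hb.
  assert (Hr : (-1 <= n <= 1)%Z).
  { apply int_bounds; simpl; revert Hb; unfold Rabs; destruct Rcase_abs; lra. }
  assert (Hc : (n = -1 \/ n = 0 \/ n = 1)%Z) by lia; destruct Hc as [ -> | [ -> | -> ] ]; simpl in He;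
  unfold distS1, Rmin; revert Hb;
  unfold Rabs; repeat (destruct (Rle_dec _ _)); repeat (destruct (Rcase_abs _)); lra.
Qed.

Lemma signed_rep (u w : R) : 0 <= u < 1 -> 0 <= w < 1 ->
  exists e n, u - w = e + IZR n /\ Rabs e <= 1/2 /\ distS1 u w = Rabs e.
Proof.
  intros Hu Hw.
  destruct (Rlt_dec (1/2) (u - w)).
  - exists (u - w - 1), 1%Z. assert (Rabs (u-w-1) <= 1/2) by (unfold Rabs; destruct Rcase_abs; lra).
    repeat split; [simpl; lra| assumption| apply (distS1_shift _ _ _ 1%Z); auto; simpl; lra].
  - destruct (Rlt_dec (u - w) (-(1/2))).
    + exists (u - w + 1), (-1)%Z. assert (Rabs (u-w+1) <= 1/2) by (unfold Rabs; destruct Rcase_abs; lra).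
      repeat split; [simpl; lra| assumption| apply (distS1_shift _ _ _ (-1)%Z); auto; simpl; lra].
    + exists (u - w), 0%Z. assert (Rabs (u-w) <= 1/2) by (unfold Rabs; destruct Rcase_abs; lra).
      repeat split; [simpl; lra| assumption| apply (distS1_shift _ _ _ 0%Z); auto; simpl; lra].
Qed.

Lemma affine_int (A B : R) : (forall z, exists n : Z, A + B * z = IZR n) -> B = 0.
Proof.
  intros H. destruct (Req_dec B 0) as [|HB]; [assumption|exfalso].
  destruct (H 0) as [n0 H0]. destruct (H (1/(2*B))) as [n1 H1].
  apply (half_not_int (n1 - n0)). rewrite minus_IZR. rewrite <- H0, <- H1. field. assumption.
Qed.

Definition line (a b c d s : R) : cyl := pt (a + c * s) (b + d * s).

Lemma cdist_sq (p q : cyl) : cdist p q ^ 2 = distS1 (th p) (th q) ^ 2 + (ht p - ht q) ^ 2.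
Proof.
  unfold cdist. rewrite <- Rsqr_pow2. rewrite Rsqr_sqrt; [reflexivity|].
  apply Rplus_le_le_0_compat; apply pow2_ge_0.
Qed.

Lemma cdist_nonneg (p q : cyl) : 0 <= cdist p q.
Proof. unfold cdist. apply sqrt_pos. Qed.

Lemma line_li (a b c d : R) : c ^ 2 + d ^ 2 = 1 -> local_isometry (line a b c d).
Proof.
  intros Hcd s. exists (1/4). split; [lra|]. intros s1 s2 H1 H2.
  assert (Hc : Rabs c <= 1).
  { rewrite <- (Rabs_R1). apply Rsqr_le_abs_0. unfold Rsqr. nra. }
  assert (Hs : Rabs (s1 - s2) <= 1/2).
  { replace (s1 - s2) with ((s1 - s) - (s2 - s)) by ring.
    eapply Rle_trans; [apply Rabs_triang|]. rewrite Rabs_Ropp. lra. }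
  destruct (frac_spec (a + c * s1)) as [n1 Hn1].
  destruct (frac_spec (a + c * s2)) as [n2 Hn2].
  assert (HD : distS1 (th (line a b c d s1)) (th (line a b c d s2)) = Rabs (c * (s1 - s2))).
  { unfold line, pt; simpl. apply (distS1_shift _ _ _ (n2 - n1)%Z);
      try apply frac_range.
    - rewrite minus_IZR. lra.
    - rewrite Rabs_mult. assert (0 <= Rabs (s1 - s2)) by apply Rabs_pos.
      assert (0 <= Rabs c) by apply Rabs_pos. nra. }
  unfold cdist. rewrite HD. unfold line, pt; cbn [th ht].
  match goal with |- sqrt ?X = _ => replace X with (Rabs (s1 - s2) ^ 2) end.
  - apply sqrt_pow2, Rabs_pos.
  - rewrite !pow2_abs. transitivity ((c^2 + d^2) * (s1 - s2)^2); [rewrite Hcd; ring| ring].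
Qed.

Lemma geodesic_line (G : cyl -> Prop) (a b c d : R) : c ^ 2 + d ^ 2 = 1 ->
  (forall q, G q <-> exists s, line a b c d s = q) -> geodesic G.
Proof. intros Hcd HG. exists (line a b c d). split; [apply line_li; assumption|assumption]. Qed.

Lemma small_abs (e r : R) : e ^ 2 <= r ^ 2 -> Rabs r < 1/8 -> Rabs e < 1/8.
Proof.
  intros H1 H2. revert H2. unfold Rabs; destruct (Rcase_abs r); destruct (Rcase_abs e); intros; nra.
Qed.

Lemma local_rep (g : R -> cyl) : local_isometry g -> forall s0, exists eps, 0 < eps /\
  exists c d, c ^ 2 + d ^ 2 = 1 /\ forall t, Rabs (t - s0) < eps ->
    g t = line (th (g s0)) (ht (g s0)) c d (t - s0).
Proof.
  intros Hg s0. destruct (Hg s0) as [e1 [He1 Hiso]].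
  set (eps := Rmin e1 (1/8)).
  assert (Heps : 0 < eps) by (unfold eps, Rmin; destruct Rle_dec; lra).
  assert (Heps1 : eps <= e1) by apply Rmin_l.
  assert (Heps2 : eps <= 1/8) by apply Rmin_r.
  assert (Hfact : forall t, Rabs (t - s0) < eps -> exists e n,
    th (g t) - th (g s0) = e + IZR n /\
    e ^ 2 + (ht (g t) - ht (g s0)) ^ 2 = (t - s0) ^ 2 /\ Rabs e < 1/8).
  { intros t Ht. destruct (signed_rep (th (g t)) (th (g s0)) (th_range _) (th_range _))
      as [e [n [He [Hb Hd]]]].
    assert (Hc := Hiso t s0 ltac:(lra) ltac:(rewrite Rminus_diag, Rabs_R0; lra)).
    assert (Hsq := cdist_sq (g t) (g s0)). rewrite Hc, Hd, !pow2_abs in Hsq.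
    exists e, n. split; [assumption|]. split; [lra|].
    apply small_abs with (t - s0); [|lra].
    pose proof (pow2_ge_0 (ht (g t) - ht (g s0))). lra. }
  set (ts := s0 + eps / 2).
  assert (Hts : Rabs (ts - s0) < eps).
  { unfold ts. replace (s0 + eps/2 - s0) with (eps/2) by ring. rewrite Rabs_right; lra. }
  destruct (Hfact ts Hts) as [es [ns [Hes1 [Hes2 Hes3]]]].
  set (rs := eps / 2).
  assert (Hrs : rs <> 0) by (unfold rs; lra).
  set (Hs := ht (g ts) - ht (g s0)).
  assert (E2 : es ^ 2 + Hs ^ 2 = rs ^ 2) by (unfold Hs, rs; rewrite Hes2; unfold ts; ring).
  exists eps. split; [assumption|]. exists (es / rs), (Hs / rs). split.
  { field_simplify; [|assumption]. rewrite E2. field. assumption. }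
  intros t Ht. destruct (Hfact t Ht) as [e [n [He1' [He2 He3]]]].
  set (r := t - s0). set (H := ht (g t) - ht (g s0)).
  assert (E1 : e ^ 2 + H ^ 2 = r ^ 2) by exact He2.
  assert (Hcross : distS1 (th (g t)) (th (g ts)) = Rabs (e - es)).
  { apply (distS1_shift _ _ _ (n - ns)%Z); try apply th_range.
    - rewrite minus_IZR. lra.
    - assert (Rabs (e - es) <= Rabs e + Rabs es).
      { unfold Rminus. eapply Rle_trans; [apply Rabs_triang|]. rewrite Rabs_Ropp. lra. }
      lra. }
  assert (E3 : (e - es) ^ 2 + (H - Hs) ^ 2 = (r - rs) ^ 2).
  { assert (Hts' : Rabs (ts - s0) < e1) by lra.
    assert (Hc := Hiso t ts ltac:(lra) Hts').
    assert (Hsq := cdist_sq (g t) (g ts)). rewrite Hc, Hcross, !pow2_abs in Hsq.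
    unfold H, Hs, r, rs. replace (t - s0 - eps / 2) with (t - ts) by (unfold ts; ring).
    rewrite Hsq. ring. }
  assert (Key : e * es + H * Hs = r * rs) by lra.
  assert (Z0 : (rs * e - es * r) ^ 2 + (rs * H - Hs * r) ^ 2 = 0).
  { transitivity (rs ^ 2 * (e ^ 2 + H ^ 2) - 2 * rs * r * (e * es + H * Hs)
                  + r ^ 2 * (es ^ 2 + Hs ^ 2)); [ring|].
    rewrite E1, Key, E2. ring. }
  rewrite <- !Rsqr_pow2 in Z0. apply Rplus_sqr_eq_0 in Z0. destruct Z0 as [Z1 Z2].
  assert (Ee : e = es / rs * r) by (field_simplify_eq; [lra|assumption]).
  assert (EH : H = Hs / rs * r) by (field_simplify_eq; [lra|assumption]).
  apply cyl_eq; unfold line, pt; cbn [th ht].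
  - rewrite <- Ee.
    replace (th (g s0) + e) with (th (g t) + IZR (- n)) by (rewrite opp_IZR; lra).
    rewrite frac_shift, frac_id; [reflexivity| apply th_range].
  - rewrite <- EH. unfold H. ring.
Qed.

Lemma abs_le1 (c d : R) : c ^ 2 + d ^ 2 = 1 -> -1 <= c <= 1.
Proof. intros H. pose proof (pow2_ge_0 d). split; nra. Qed.

Lemma small_int (k : Z) : -1 < IZR k < 1 -> k = 0%Z.
Proof. intros H. assert (h : (0 <= k <= 0)%Z) by (apply int_bounds; simpl; lra). lia. Qed.

Lemma glob (g : R -> cyl) (a b c d : R) : local_isometry g -> c ^ 2 + d ^ 2 = 1 ->
  (exists e, 0 < e /\ forall t, Rabs t < e -> g t = line a b c d t) ->
  forall s, 0 <= s -> g s = line a b c d s.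
Proof.
  intros Hg Hcd [e0 [He0 Hloc]] s Hs.
  apply NNPP; intro Hns.
  set (A := fun x => 0 <= x /\ forall t, 0 <= t <= x -> g t = line a b c d t).
  assert (HA0 : A (e0 / 2)).
  { split; [lra|]. intros t Ht. apply Hloc. rewrite Rabs_right; lra. }
  assert (Hub : is_upper_bound A s).
  { intros x [Hx0 Hx]. destruct (Rle_dec x s) as [|Hxs]; [assumption|].
    exfalso. apply Hns, Hx. lra. }
  destruct (completeness A (ex_intro _ s Hub) (ex_intro _ _ HA0)) as [m [Hm1 Hm2]].
  assert (Hme : e0 / 2 <= m) by (apply Hm1; exact HA0).
  destruct (local_rep g Hg m) as [eps [Heps [c' [d' [Hcd' Hm]]]]].
  assert (Hx : exists x, A x /\ m - eps < x).
  { apply NNPP; intro Hn. assert (Hb : is_upper_bound A (m - eps)).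
    { intros x Ax. destruct (Rle_dec x (m - eps)) as [|Hx]; [assumption|].
      exfalso; apply Hn; exists x; split; [assumption|lra]. }
    specialize (Hm2 _ Hb). lra. }
  destruct Hx as [x [Ax Hxm]].
  set (x1 := Rmax x (e0 / 2)).
  assert (Ax1 : A x1) by (unfold x1, Rmax; destruct Rle_dec; assumption).
  assert (Hx1a : x <= x1) by apply Rmax_l.
  assert (Hx1b : e0 / 2 <= x1) by apply Rmax_r.
  assert (Hx1m : x1 <= m) by (apply Hm1; exact Ax1).
  set (lo := Rmax (m - eps) 0).
  assert (Hlo1 : m - eps <= lo) by apply Rmax_l.
  assert (Hlo2 : 0 <= lo) by apply Rmax_r.
  assert (Hlo3 : lo < x1) by (unfold lo, Rmax; destruct Rle_dec; lra).
  set (rho := Rmin ((x1 - lo) / 2) (1/4)).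
  assert (Hr1 : rho <= (x1 - lo) / 2) by apply Rmin_l.
  assert (Hr2 : rho <= 1/4) by apply Rmin_r.
  assert (Hr3 : 0 < rho) by (unfold rho, Rmin; destruct Rle_dec; lra).
  assert (Hpt : forall t, lo < t <= x1 -> exists n : Z,
    a + c * t - (th (g m) + c' * (t - m)) = IZR n /\ b + d * t = ht (g m) + d' * (t - m)).
  { intros t Ht. destruct Ax1 as [_ HA]. assert (E1 := HA t ltac:(lra)).
    assert (E2 := Hm t ltac:(unfold Rabs; destruct Rcase_abs; lra)).
    rewrite E1 in E2. assert (Eth := f_equal th E2). assert (Eht := f_equal ht E2).
    unfold line, pt in Eth, Eht; cbn [th ht] in Eth, Eht.
    apply frac_eq in Eth. destruct Eth as [n Hn]. exists n. split; assumption. }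
  destruct (Hpt x1 ltac:(lra)) as [n1 [Hn1 Hh1]].
  destruct (Hpt (x1 - rho) ltac:(lra)) as [n2 [Hn2 Hh2]].
  pose proof (abs_le1 c d Hcd). pose proof (abs_le1 c' d' Hcd').
  pose proof (abs_le1 d c ltac:(lra)). pose proof (abs_le1 d' c' ltac:(lra)).
  assert (Hk : n1 = n2).
  { assert (HZ : (n1 - n2)%Z = 0%Z); [|lia]. apply small_int. rewrite minus_IZR.
    assert (IZR n1 - IZR n2 = (c - c') * rho) by lra. split; nra. }
  subst n2.
  assert (Ec : c = c') by (assert ((c - c') * rho = 0) by lra; nra).
  assert (Ed : d = d') by (assert ((d - d') * rho = 0) by lra; nra).
  subst c' d'.
  assert (HA' : A (m + eps / 2)).
  { split; [lra|]. intros t Ht. destruct (Rle_dec t x1) as [Htx|Htx].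
    - destruct Ax1 as [_ HA]. apply HA; lra.
    - rewrite (Hm t ltac:(unfold Rabs; destruct Rcase_abs; lra)).
      apply cyl_eq; unfold line, pt; cbn [th ht].
      + apply frac_eq. exists (- n1)%Z. rewrite opp_IZR. lra.
      + lra. }
  specialize (Hm1 _ HA'). lra.
Qed.

Lemma li_neg (g : R -> cyl) : local_isometry g -> local_isometry (fun t => g (- t)).
Proof.
  intros Hg s. destruct (Hg (- s)) as [e [He H]]. exists e. split; [assumption|].
  intros s1 s2 H1 H2. rewrite H.
  - replace (- s1 - - s2) with (- (s1 - s2)) by ring. apply Rabs_Ropp.
  - replace (- s1 - - s) with (- (s1 - s)) by ring. rewrite Rabs_Ropp. assumption.
  - replace (- s2 - - s) with (- (s2 - s)) by ring. rewrite Rabs_Ropp. assumption.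
Qed.

Lemma classify (G : cyl -> Prop) : geodesic G -> exists a b c d, c ^ 2 + d ^ 2 = 1 /\
  forall q, G q <-> exists s, line a b c d s = q.
Proof.
  intros [g [Hg HG]].
  destruct (local_rep g Hg 0) as [eps [Heps [c [d [Hcd H0]]]]].
  set (a := th (g 0)). set (b := ht (g 0)).
  assert (Hall : forall s, g s = line a b c d s).
  { intros s. destruct (Rle_dec 0 s) as [Hs|Hs].
    - apply (glob g a b c d Hg Hcd); [|assumption].
      exists eps. split; [assumption|]. intros t Ht. rewrite H0; [|rewrite Rminus_0_r; assumption].
      rewrite Rminus_0_r. reflexivity.
    - assert (Hcd2 : (- c) ^ 2 + (- d) ^ 2 = 1) by (rewrite <- Hcd; ring).
      assert (Hl : exists e, 0 < e /\ forall t, Rabs t < e -> (fun t => g (- t)) t = line a b (- c) (- d) t).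
      { exists eps; split; [assumption|]; intros t Ht. cbv beta.
        rewrite H0 by (rewrite Rminus_0_r, Rabs_Ropp; assumption).
        unfold line, a, b. f_equal; ring. }
      assert (E := glob (fun t => g (- t)) a b (- c) (- d) (li_neg g Hg) Hcd2 Hl (- s) ltac:(lra)).
      cbv beta in E. rewrite Ropp_involutive in E. rewrite E. unfold line. f_equal; ring. }
  exists a, b, c, d. split; [assumption|]. intros q. rewrite HG. split.
  - intros [s Hs]. exists s. rewrite <- Hall. assumption.
  - intros [s Hs]. exists s. rewrite Hall. assumption.
Qed.

Lemma geo_hel (a b c d : R) : d <> 0 -> forall q,
  (exists s, line a b c d s = q) <-> th q = frac (a - c / d * b + c / d * ht q).
Proof.
  intros Hd q. split.
  - intros [s <-]. unfold line, pt; cbn [th ht]. apply frac_ext. field. assumption.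
  - intros Hq. exists ((ht q - b) / d). apply cyl_eq; unfold line, pt; cbn [th ht].
    + rewrite Hq. apply frac_ext. field. assumption.
    + field. assumption.
Qed.

Lemma geo_c0 (a b c d s : R) : c = 0 -> th (line a b c d s) = frac a.
Proof. intros ->. unfold line, pt; cbn [th]. apply frac_ext. ring. Qed.

Lemma geo_d0 (a b c d s : R) : d = 0 -> ht (line a b c d s) = b.
Proof. intros ->. unfold line, pt; cbn [ht]. ring. Qed.

Definition Hel (al be : R) : cyl -> Prop := fun p => th p = frac (al + be * ht p).

Lemma hel_geo (al be : R) : geodesic (Hel al be).
Proof.
  set (k := / sqrt (1 + be ^ 2)).
  assert (Hpos : 0 < 1 + be ^ 2) by (pose proof (pow2_ge_0 be); lra).
  assert (Hs : 0 < sqrt (1 + be ^ 2)) by (apply sqrt_lt_R0; assumption).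
  assert (Hk : k <> 0) by (unfold k; apply Rinv_neq_0_compat; lra).
  assert (Hk2 : k ^ 2 = / (1 + be ^ 2)).
  { unfold k. rewrite pow_inv. rewrite <- Rsqr_pow2, Rsqr_sqrt; [reflexivity|lra]. }
  apply (geodesic_line _ al 0 (be * k) k).
  - replace ((be * k) ^ 2 + k ^ 2) with ((1 + be ^ 2) * k ^ 2) by ring.
    rewrite Hk2. field. lra.
  - intros q. rewrite geo_hel by assumption. unfold Hel.
    replace (al - be * k / k * 0 + be * k / k * ht q) with (al + be * ht q)
      by (field; assumption). reflexivity.
Qed.

Lemma circ_geo (y : R) : geodesic (fun q => ht q = y).
Proof.
  apply (geodesic_line _ 0 y 1 0); [ring|]. intros q. split.
  - intros Hq. exists (th q). apply cyl_eq; unfold line, pt; cbn [th ht].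
    + replace (0 + 1 * th q) with (th q) by ring. apply frac_id, th_range.
    + rewrite Hq; ring.
  - intros [s <-]. unfold line, pt; cbn [ht]. ring.
Qed.

Lemma vert_geo (x : R) : 0 <= x < 1 -> geodesic (fun q => th q = x).
Proof.
  intros Hx. apply (geodesic_line _ x 0 0 1); [ring|]. intros q. split.
  - intros Hq. exists (ht q). apply cyl_eq; unfold line, pt; cbn [th ht].
    + rewrite Hq. replace (x + 0 * ht q) with x by ring. apply frac_id; assumption.
    + ring.
  - intros [s <-]. unfold line, pt; cbn [th]. replace (x + 0 * s) with x by ring. apply frac_id; assumption.
Qed.

Definition Hyp (t0 : R) (f : cyl -> cyl) : Prop :=
  bijective f /\ geodesic_preserving f /\
  (forall q, image f (vline t0) q <-> vline t0 q) /\
  f (pt t0 0) = pt t0 0 /\ f (pt t0 1) = pt t0 1.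

Definition phi (t0 : R) (f : cyl -> cyl) (y : R) : R := ht (f (pt t0 y)).


Lemma H_inj t0 f : Hyp t0 f -> forall p q, f p = f q -> p = q.
Proof.
  intros [[g [Hg1 Hg2]] _] p q E. rewrite <- (Hg1 p), <- (Hg1 q), E. reflexivity.
Qed.

Lemma H_surj t0 f : Hyp t0 f -> forall q, exists p, f p = q.
Proof. intros [[g [Hg1 Hg2]] _] q. exists (g q). apply Hg2. Qed.

Lemma H_v1 t0 f : Hyp t0 f -> forall p, th p = frac t0 -> th (f p) = frac t0.
Proof.
  intros H p Hp. destruct H as [_ [_ [Hv _]]]. apply (Hv (f p)). exists p. split; [exact Hp|reflexivity].
Qed.

Lemma H_v2 t0 f : Hyp t0 f -> forall p, th (f p) = frac t0 -> th p = frac t0.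
Proof.
  intros H p Hp. pose proof (H_inj t0 f H) as Hi. destruct H as [_ [_ [Hv _]]].
  destruct (proj2 (Hv (f p)) Hp) as [p' [Hp' E]]. apply Hi in E. subst p'. exact Hp'.
Qed.

Lemma H_geo t0 f : Hyp t0 f -> forall G, geodesic G -> exists a b c d, c ^ 2 + d ^ 2 = 1 /\
  forall q, image f G q <-> exists s, line a b c d s = q.
Proof. intros H G HG. apply classify. destruct H as [_ [Hg _]]. apply Hg, HG. Qed.

Lemma H_horiz t0 f : Hyp t0 f -> forall p, ht (f p) = phi t0 f (ht p).
Proof.
  intros H p. set (y := ht p).
  destruct (H_geo t0 f H _ (circ_geo y)) as [a [b [c [d [Hcd HG]]]]].
  assert (Hq0 : image f (fun q => ht q = y) (f (pt t0 y))) by (exists (pt t0 y); split; reflexivity).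
  assert (Hp : image f (fun q => ht q = y) (f p)) by (exists p; split; reflexivity).
  destruct (Req_dec d 0) as [Hd|Hd].
  - apply HG in Hq0. apply HG in Hp. destruct Hq0 as [s0 Hs0]. destruct Hp as [s1 Hs1].
    unfold phi. rewrite <- Hs0, <- Hs1, !geo_d0 by assumption. reflexivity.
  - exfalso. set (q0 := f (pt t0 y)).
    assert (Hth0 : th q0 = frac t0) by (apply (H_v1 t0 f H); reflexivity).
    assert (Hin : forall q, image f (fun q => ht q = y) q <-> th q = frac (a - c / d * b + c / d * ht q)).
    { intros q. rewrite HG. apply geo_hel. assumption. }
    set (m := c / d).
    assert (Hw : exists w, w <> 0 /\ exists k : Z, m * w = IZR k).
    { destruct (Req_dec m 0) as [Hm|Hm].
      - exists 1. split; [lra|]. exists 0%Z. rewrite Hm. simpl. ring.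
      - exists (/ m). split; [apply Rinv_neq_0_compat; assumption|]. exists 1%Z. simpl. field. assumption. }
    destruct Hw as [w [Hw [k Hk]]].
    set (q1 := pt t0 (ht q0 + w)).
    assert (Hq1 : image f (fun q => ht q = y) q1).
    { apply Hin. change (th q1) with (frac t0). change (ht q1) with (ht q0 + w).
      transitivity (th q0); [symmetry; exact Hth0|]. apply Hin in Hq0. etransitivity; [exact Hq0|].
      rewrite <- (frac_shift _ k). apply frac_ext. rewrite <- Hk. unfold m, q0. ring. }
    destruct Hq1 as [p1 [Hp1 E1]].
    assert (Hth1 : th p1 = frac t0) by (apply (H_v2 t0 f H); rewrite E1; reflexivity).
    assert (Ep : p1 = pt t0 y) by (apply cyl_eq; [exact Hth1| exact Hp1]).
    subst p1. fold q0 in E1. assert (E2 := f_equal ht E1). unfold q1, pt in E2; cbn [ht] in E2. lra.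
Qed.

Lemma H_vert t0 f : Hyp t0 f -> forall p q, th p = th q -> th (f p) = th (f q).
Proof.
  intros H p q Hpq. destruct (Req_dec (th p) (frac t0)) as [E|E].
  - rewrite !(H_v1 t0 f H); congruence.
  - destruct (H_geo t0 f H _ (vert_geo (th p) (th_range p))) as [a [b [c [d [Hcd HG]]]]].
    destruct (Req_dec c 0) as [Hc|Hc].
    + assert (Hp : image f (fun r => th r = th p) (f p)) by (exists p; split; reflexivity).
      assert (Hq : image f (fun r => th r = th p) (f q)) by (exists q; split; [symmetry; exact Hpq|reflexivity]).
      apply HG in Hp. apply HG in Hq. destruct Hp as [s1 <-]. destruct Hq as [s2 <-].
      rewrite !geo_c0 by assumption. reflexivity.
    + exfalso. set (s0 := (t0 - a) / c).
      assert (Hl : image f (fun r => th r = th p) (line a b c d s0)) by (apply HG; exists s0; reflexivity).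
      destruct Hl as [r [Hr Er]].
      assert (Hth : th r = frac t0).
      { apply (H_v2 t0 f H). rewrite Er. unfold line, pt; cbn [th]. apply frac_ext. unfold s0. field. assumption. }
      apply E. rewrite <- Hr. exact Hth.
Qed.

Lemma H_phi0 t0 f : Hyp t0 f -> phi t0 f 0 = 0.
Proof. intros H. unfold phi. destruct H as [_ [_ [_ [H0 _]]]]. rewrite H0. reflexivity. Qed.

Lemma H_phi1 t0 f : Hyp t0 f -> phi t0 f 1 = 1.
Proof. intros H. unfold phi. destruct H as [_ [_ [_ [_ H1]]]]. rewrite H1. reflexivity. Qed.

Lemma H_thinj t0 f : Hyp t0 f -> forall p q, th (f p) = th (f q) -> th p = th q.
Proof.
  intros H p q E.
  set (p' := pt (th p) 0). set (q' := pt (th q) 0).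
  assert (Ep : th p' = th p) by (apply frac_id, th_range).
  assert (Eq : th q' = th q) by (apply frac_id, th_range).
  assert (E' : f p' = f q').
  { apply cyl_eq.
    - rewrite (H_vert t0 f H p' p Ep), (H_vert t0 f H q' q Eq). exact E.
    - rewrite !(H_horiz t0 f H). reflexivity. }
  apply (H_inj t0 f H) in E'. rewrite <- Ep, <- Eq, E'. reflexivity.
Qed.

Lemma H_phi_inj t0 f : Hyp t0 f -> forall y1 y2, phi t0 f y1 = phi t0 f y2 -> y1 = y2.
Proof.
  intros H y1 y2 E. assert (E' : f (pt t0 y1) = f (pt t0 y2)).
  { apply cyl_eq; [rewrite !(H_v1 t0 f H) by reflexivity; reflexivity| exact E]. }
  apply (H_inj t0 f H) in E'. exact (f_equal ht E').
Qed.

Lemma H_phi_surj t0 f : Hyp t0 f -> forall z, exists y, phi t0 f y = z.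
Proof.
  intros H z. destruct (H_surj t0 f H (pt t0 z)) as [p Hp]. exists (ht p).
  rewrite <- (H_horiz t0 f H), Hp. reflexivity.
Qed.

Lemma H_scal t0 f : Hyp t0 f -> forall r, (forall x, exists n : Z, r * phi t0 f x = IZR n) -> r = 0.
Proof.
  intros H r Hr. destruct (Req_dec r 0) as [|Hr0]; [assumption|exfalso].
  destruct (H_phi_surj t0 f H (1 / (2 * r))) as [x Hx]. destruct (Hr x) as [n Hn].
  apply (half_not_int n). rewrite <- Hn, Hx. field. assumption.
Qed.

Lemma H_hel t0 f al be : Hyp t0 f -> be <> 0 -> exists A m, m <> 0 /\
  forall q, image f (Hel al be) q <-> th q = frac (A + m * ht q).
Proof.
  intros H Hbe. destruct (H_geo t0 f H _ (hel_geo al be)) as [a [b [c [d [Hcd HG]]]]].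
  assert (HP0 : Hel al be (pt al 0)) by (unfold Hel, pt; cbn [th ht]; apply frac_ext; ring).
  assert (I0 : image f (Hel al be) (f (pt al 0))) by (exists (pt al 0); split; [exact HP0|reflexivity]).
  destruct (Req_dec d 0) as [Hd|Hd].
  { exfalso.
    assert (HP1 : Hel al be (pt (al + be) 1)) by (unfold Hel, pt; cbn [th ht]; apply frac_ext; ring).
    assert (I1 : image f (Hel al be) (f (pt (al + be) 1))) by (exists (pt (al + be) 1); split; [exact HP1|reflexivity]).
    apply HG in I0; apply HG in I1. destruct I0 as [s0 E0]. destruct I1 as [s1 E1].
    assert (E : ht (f (pt al 0)) = ht (f (pt (al + be) 1))) by (rewrite <- E0, <- E1, !geo_d0; auto).
    rewrite !(H_horiz t0 f H) in E. apply (H_phi_inj t0 f H) in E. cbn [ht pt] in E. lra. }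
  destruct (Req_dec c 0) as [Hc|Hc].
  { exfalso.
    assert (HP1 : Hel al be (pt (al + 1/2) (1 / (2 * be))))
      by (unfold Hel, pt; cbn [th ht]; apply frac_ext; field; assumption).
    assert (I1 : image f (Hel al be) (f (pt (al + 1/2) (1 / (2 * be)))))
      by (eexists; split; [exact HP1|reflexivity]).
    apply HG in I0; apply HG in I1. destruct I0 as [s0 E0]. destruct I1 as [s1 E1].
    assert (E : th (f (pt al 0)) = th (f (pt (al + 1/2) (1 / (2 * be)))))
      by (rewrite <- E0, <- E1, !geo_c0; auto).
    apply (H_thinj t0 f H) in E. cbn [th pt] in E. apply frac_eq in E. destruct E as [n Hn].
    apply (half_not_int (- n)). rewrite opp_IZR, <- Hn. ring. }
  exists (a - c / d * b), (c / d). split.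
  - unfold Rdiv. apply Rmult_integral_contrapositive. split; [assumption|apply Rinv_neq_0_compat; assumption].
  - intros q. rewrite HG. apply geo_hel. assumption.
Qed.

Lemma H_par t0 f al1 al2 be A1 A2 m1 m2 : Hyp t0 f -> be <> 0 ->
  (forall q, image f (Hel al1 be) q <-> th q = frac (A1 + m1 * ht q)) ->
  (forall q, image f (Hel al2 be) q <-> th q = frac (A2 + m2 * ht q)) -> m1 = m2.
Proof.
  intros H Hbe H1 H2.
  destruct (classic (exists n : Z, al1 - al2 = IZR n)) as [[n Hn]|Hno].
  - assert (Heq : forall r, Hel al1 be r -> Hel al2 be r).
    { unfold Hel. intros r Hr. rewrite Hr. apply frac_eq. exists n. lra. }
    assert (Hz : forall z, exists k : Z, (A1 - A2) + (m1 - m2) * z = IZR k).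
    { intros z. set (q := pt (A1 + m1 * z) z).
      assert (Q1 : image f (Hel al1 be) q) by (apply H1; reflexivity).
      destruct Q1 as [p [Hp Ep]].
      assert (Q2 : image f (Hel al2 be) q) by (exists p; split; [apply Heq; exact Hp|exact Ep]).
      apply H2 in Q2. change (th q) with (frac (A1 + m1 * z)) in Q2. change (ht q) with z in Q2.
      apply frac_eq in Q2. destruct Q2 as [k Hk]. exists k. rewrite <- Hk. ring. }
    apply affine_int in Hz. lra.
  - apply NNPP. intro Hm. apply Hno.
    set (z := (A2 - A1) / (m1 - m2)).
    set (q := pt (A1 + m1 * z) z).
    assert (Q1 : image f (Hel al1 be) q) by (apply H1; reflexivity).
    assert (Q2 : image f (Hel al2 be) q).
    { apply H2. change (th q) with (frac (A1 + m1 * z)). change (ht q) with z.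
      apply frac_ext. unfold z. field. lra. }
    destruct Q1 as [p1 [Hp1 E1]]. destruct Q2 as [p2 [Hp2 E2]].
    rewrite <- E2 in E1. apply (H_inj t0 f H) in E1. subst p2.
    unfold Hel in Hp1, Hp2. rewrite Hp1 in Hp2. apply frac_eq in Hp2. destruct Hp2 as [n Hn].
    exists n. rewrite <- Hn. ring.
Qed.

Definition slope_of t0 f be m : Prop := exists A, frac A = frac t0 /\
  forall q, image f (Hel t0 be) q <-> th q = frac (A + m * ht q).

Lemma H_slope_ex t0 f be : Hyp t0 f -> be <> 0 -> exists m, m <> 0 /\ slope_of t0 f be m.
Proof.
  intros H Hbe. destruct (H_hel t0 f t0 be H Hbe) as [A [m [Hm HA]]].
  exists m. split; [assumption|]. exists A. split; [|assumption].
  assert (I0 : image f (Hel t0 be) (pt t0 0)).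
  { exists (pt t0 0). split; [unfold Hel, pt; cbn [th ht]; apply frac_ext; ring|].
    destruct H as [_ [_ [_ [H0 _]]]]. exact H0. }
  apply HA in I0. cbn [th ht pt] in I0. rewrite I0. apply frac_ext. ring.
Qed.

Lemma H_E t0 f be m : Hyp t0 f -> be <> 0 -> slope_of t0 f be m ->
  forall x c, exists n : Z, m * (phi t0 f x - phi t0 f c - phi t0 f (x - c)) = IZR n.
Proof.
  intros H Hbe [A [HA0 HA]] x c.
  destruct (H_hel t0 f (t0 - be * c) be H Hbe) as [Ac [mc [Hmc HAc]]].
  assert (Em := H_par t0 f t0 (t0 - be * c) be A Ac m mc H Hbe HA HAc). subst mc.
  assert (I1 : image f (Hel (t0 - be * c) be) (f (pt t0 c))).
  { exists (pt t0 c). split; [|reflexivity]. unfold Hel, pt; cbn [th ht]. apply frac_ext. ring. }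
  apply HAc in I1. rewrite (H_v1 t0 f H) in I1 by reflexivity.
  rewrite (H_horiz t0 f H) in I1. cbn [ht pt] in I1.
  set (P := pt (t0 + be * (x - c)) x). set (Q := pt (t0 + be * (x - c)) (x - c)).
  assert (IP : image f (Hel (t0 - be * c) be) (f P)).
  { exists P. split; [|reflexivity]. unfold Hel, P, pt; cbn [th ht]. apply frac_ext. ring. }
  assert (IQ : image f (Hel t0 be) (f Q)).
  { exists Q. split; [|reflexivity]. unfold Hel, Q, pt; cbn [th ht]. apply frac_ext. ring. }
  apply HAc in IP. apply HA in IQ.
  assert (EPQ : th (f P) = th (f Q)) by (apply (H_vert t0 f H); reflexivity).
  rewrite IP, IQ in EPQ. rewrite !(H_horiz t0 f H) in EPQ. unfold P, Q, pt in EPQ; cbn [ht] in EPQ.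
  apply frac_eq in EPQ. destruct EPQ as [n1 Hn1].
  apply frac_eq in I1. destruct I1 as [n2 Hn2].
  apply frac_eq in HA0. destruct HA0 as [n3 Hn3].
  exists (n1 + n2 + n3)%Z. rewrite !plus_IZR. rewrite <- Hn1, <- Hn2, <- Hn3. ring.
Qed.

Lemma H_half t0 f be m m' : Hyp t0 f -> be <> 0 -> slope_of t0 f be m ->
  slope_of t0 f (be / 2) m' -> m' = m / 2.
Proof.
  intros H Hbe Hs [A' [HA'0 HA']].
  assert (HE := H_E t0 f be m H Hbe Hs). destruct Hs as [A [HA0 HA]].
  assert (Hz : forall x, exists n : Z, (2 * m' - m) * phi t0 f x = IZR n).
  { intros x.
    set (P := pt (t0 + be / 2 * x) x). set (Q := pt (t0 + be * (x / 2)) (x / 2)).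
    assert (IP : image f (Hel t0 (be / 2)) (f P)).
    { exists P. split; [|reflexivity]. unfold Hel, P, pt; cbn [th ht]. apply frac_ext. ring. }
    assert (IQ : image f (Hel t0 be) (f Q)).
    { exists Q. split; [|reflexivity]. unfold Hel, Q, pt; cbn [th ht]. apply frac_ext. ring. }
    apply HA' in IP. apply HA in IQ.
    assert (EPQ : th (f P) = th (f Q)).
    { apply (H_vert t0 f H). unfold P, Q, pt; cbn [th]. apply frac_ext. field. }
    rewrite IP, IQ in EPQ. rewrite !(H_horiz t0 f H) in EPQ. unfold P, Q, pt in EPQ; cbn [ht] in EPQ.
    apply frac_eq in EPQ. destruct EPQ as [n1 Hn1].
    rewrite <- HA0 in HA'0. apply frac_eq in HA'0. destruct HA'0 as [n3 Hn3].
    destruct (HE x (x / 2)) as [n2 Hn2].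
    replace (x - x / 2) with (x / 2) in Hn2 by field.
    exists (2 * (n1 - n3) - n2)%Z. rewrite minus_IZR, mult_IZR, minus_IZR.
    rewrite <- Hn1, <- Hn2, <- Hn3. simpl. ring. }
  apply (H_scal t0 f H) in Hz. lra.
Qed.

Lemma pow2_gt (n : nat) : INR n < 2 ^ n.
Proof.
  induction n as [|n IH]; [simpl; lra|]. rewrite S_INR. simpl.
  pose proof (pow_R1_Rle 2 n ltac:(lra)). lra.
Qed.

Lemma H_seq t0 f : Hyp t0 f -> exists m0, m0 <> 0 /\ forall k, slope_of t0 f (/ 2 ^ k) (m0 / 2 ^ k).
Proof.
  intros H. destruct (H_slope_ex t0 f 1 H ltac:(lra)) as [m0 [Hm0 Hs0]].
  exists m0. split; [assumption|]. intros k. induction k as [|k IH].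
  - simpl. replace (/ 1) with 1 by field. replace (m0 / 1) with m0 by field. exact Hs0.
  - assert (Hp : 2 ^ k <> 0) by (apply pow_nonzero; lra).
    assert (Hb : / 2 ^ k <> 0) by (apply Rinv_neq_0_compat; assumption).
    assert (Hb2 : / 2 ^ k / 2 <> 0) by (unfold Rdiv; apply Rmult_integral_contrapositive; split; [assumption|lra]).
    destruct (H_slope_ex t0 f (/ 2 ^ k / 2) H Hb2) as [m' [_ Hs']].
    assert (Em := H_half t0 f _ _ _ H Hb IH Hs'). subst m'.
    replace (/ 2 ^ S k) with (/ 2 ^ k / 2) by (simpl; field; assumption).
    replace (m0 / 2 ^ S k) with (m0 / 2 ^ k / 2) by (simpl; field; assumption).
    exact Hs'.
Qed.

Lemma H_add t0 f : Hyp t0 f -> forall x c, phi t0 f x - phi t0 f c - phi t0 f (x - c) = 0.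
Proof.
  intros H x c. destruct (H_seq t0 f H) as [m0 [Hm0 Hs]].
  set (E := phi t0 f x - phi t0 f c - phi t0 f (x - c)).
  apply NNPP. intro HE.
  destruct (INR_unbounded (Rabs (m0 * E))) as [N HN].
  pose proof (pow2_gt N) as HN2.
  assert (Hp : 0 < 2 ^ N) by (apply pow_lt; lra).
  assert (Hb : / 2 ^ N <> 0) by (apply Rinv_neq_0_compat; lra).
  destruct (H_E t0 f _ _ H Hb (Hs N) x c) as [n Hn]. fold E in Hn.
  assert (Hn0 : n = 0%Z).
  { apply small_int. rewrite <- Hn.
    assert (Habs : Rabs (m0 / 2 ^ N * E) < 1).
    { replace (m0 / 2 ^ N * E) with ((m0 * E) / 2 ^ N) by (field; lra).
      unfold Rdiv. rewrite Rabs_mult, Rabs_inv, (Rabs_right (2 ^ N)) by lra.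
      apply (Rmult_lt_reg_r (2 ^ N)); [lra|]. rewrite Rmult_assoc, Rinv_l by lra. lra. }
    revert Habs. unfold Rabs. destruct Rcase_abs; lra. }
  subst n. simpl in Hn. apply HE.
  assert (m0 / 2 ^ N <> 0) by (unfold Rdiv; apply Rmult_integral_contrapositive; split; assumption).
  apply Rmult_integral in Hn. destruct Hn; [contradiction|assumption].
Qed.

Lemma H_dyadic t0 f : Hyp t0 f -> forall (n : Z) (m : nat),
  phi t0 f (IZR n / 2 ^ m) = IZR n / 2 ^ m.
Proof.
  intros H. set (g := phi t0 f).
  assert (Hadd := H_add t0 f H). fold g in Hadd.
  assert (H0 : g 0 = 0) by apply (H_phi0 t0 f H).
  assert (H1 : g 1 = 1) by apply (H_phi1 t0 f H).
  assert (Hplus : forall x c, g (x + c) = g x + g c).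
  { intros x c. specialize (Hadd (x + c) c). replace (x + c - c) with x in Hadd by ring. lra. }
  assert (Hopp : forall c, g (- c) = - g c).
  { intros c. specialize (Hadd 0 c). replace (0 - c) with (- c) in Hadd by ring. lra. }
  assert (Hnat : forall (k : nat) y, g (INR k * y) = INR k * g y).
  { induction k as [|k IH]; intros y.
    - simpl. replace (0 * y) with 0 by ring. rewrite H0. ring.
    - rewrite S_INR. replace ((INR k + 1) * y) with (INR k * y + y) by ring.
      rewrite Hplus, IH. ring. }
  assert (Hint : forall (z : Z) y, g (IZR z * y) = IZR z * g y).
  { intros z y. destruct (Z.le_gt_cases 0 z) as [Hz|Hz].
    - rewrite <- (Z2Nat.id z Hz), <- INR_IZR_INZ. apply Hnat.
    - replace z with (- Z.of_nat (Z.to_nat (- z)))%Z by (rewrite Z2Nat.id; lia).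
      rewrite opp_IZR, <- INR_IZR_INZ.
      replace (- INR (Z.to_nat (- z)) * y) with (- (INR (Z.to_nat (- z)) * y)) by ring.
      rewrite Hopp, Hnat. ring. }
  assert (Hhalf : forall k, g (/ 2 ^ k) = / 2 ^ k).
  { induction k as [|k IH].
    - simpl. replace (/ 1) with 1 by field. exact H1.
    - assert (Hp : 2 ^ k <> 0) by (apply pow_nonzero; lra).
      set (u := / 2 ^ S k).
      assert (Hu : / 2 ^ k = u + u) by (unfold u; simpl; field; assumption).
      rewrite Hu, Hplus in IH. lra. }
  intros n m. unfold Rdiv. rewrite Hint, Hhalf. reflexivity.
Qed.

Theorem lemma4p4 (t0 : R) (f : cyl -> cyl) :
  bijective f -> geodesic_preserving f ->
  (forall q, image f (vline t0) q <-> vline t0 q) ->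
  f (pt t0 0) = pt t0 0 ->
  f (pt t0 1) = pt t0 1 ->
  forall (n : Z) (m : nat), f (pt t0 (IZR n / 2 ^ m)) = pt t0 (IZR n / 2 ^ m).
Proof.
  intros Hb Hg Hv H0 H1 n m.
  assert (H : Hyp t0 f) by (exact (conj Hb (conj Hg (conj Hv (conj H0 H1))))).
  apply cyl_eq.
  - rewrite (H_v1 t0 f H) by reflexivity. reflexivity.
  - change (phi t0 f (IZR n / 2 ^ m) = IZR n / 2 ^ m). apply H_dyadic. exact H.
Qed.
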